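(* Let $n\geq 4$, let $S$ be the set of all $3$-cycles in $S_n$, and let $CAG_n=\mathrm{Cay}(A_n,S)$. Then the map $h:\alpha\mapsto\alpha^{-1}$ ($\alpha\in A_n$) is an automorphism of the graph $CAG_n$. In particular, $CAG_n$ is not a normal Cayley graph, i.e. $R(A_n)$ is not a normal subgroup of $\mathrm{Aut}(CAG_n)$.
   Context: For a finite group $\Gamma$ and a subset $T\subseteq\Gamma$ with $e\notin T$ and $T=T^{-1}$, the Cayley graph $\mathrm{Cay}(\Gamma,T)$ is the undirected graph with vertex set $\Gamma$ and edge set $\{\{\gamma,t\gamma\}\mid \gamma\in\Gamma, t\in T\}$. The right regular representation $R(\Gamma)=\{r_\gamma: x\mapsto x\gamma\mid\gamma\in\Gamma\}$ is a subgroup of $\mathrm{Aut}(\mathrm{Cay}(\Gamma,T))$; the Cayley graph is called normal if $R(\Gamma)$ is a normal subgroup of $\mathrm{Aut}(\mathrm{Cay}(\Gamma,T))$. *)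

(* Defs.v *)
From HB Require Import structures.
From mathcomp Require Import all_boot all_order all_fingroup all_solvable.
Set Implicit Arguments. Unset Strict Implicit. Unset Printing Implicit Defensive.
Import GroupScope.

Definition is_3cycle (n : nat) (s : {perm 'I_n}) : bool :=
  [exists a : 'I_n, exists b : 'I_n, exists c : 'I_n,
    [&& a != b, b != c, a != c,
        (s a == b) && (s b == c) && (s c == a) &
        [forall x, [&& x != a, x != b & x != c] ==> (s x == x)]]].

(* Cayley graph Cay(G,T): vertex set G, x ~ y iff y = t x for some t in T,
   i.e. y * x^-1 \in T. *)
Definition cay_adj (gT : finGroupType) (T : {set gT}) : rel gT :=
  fun x y => y * x^-1 \in T.

Definition graph_aut (V : finType) (e : rel V) : {set {perm V}} :=
  [set f : {perm V} | [forall x, forall y, e (f x) (f y) == e x y]].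

Definition rtrans (gT : finGroupType) (g : gT) : {perm gT} :=
  perm (mulIg g).
Definition rreg (gT : finGroupType) : {set {perm gT}} :=
  [set rtrans g | g : gT].

Definition invperm (gT : finGroupType) : {perm gT} := perm (@invg_inj gT).

(* Main.v *)
Require Import Defs.
From mathcomp Require Import all_boot all_order all_fingroup all_solvable.
Import GroupScope.

Lemma c3_inv n (s : {perm 'I_n}) : is_3cycle s -> is_3cycle s^-1.
Proof.
case/existsP=> a /existsP[b /existsP[c /and5P[ab bc ac /andP[/andP[/eqP sa /eqP sb] /eqP sc] /forallP fx]]].
apply/existsP; exists a; apply/existsP; exists c; apply/existsP; exists b.
rewrite ac (eq_sym c b) bc ab /=.
have e1 : s^-1 a = c by rewrite -sc permK.
have e2 : s^-1 c = b by rewrite -sb permK.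
have e3 : s^-1 b = a by rewrite -sa permK.
rewrite e1 e2 e3 !eqxx /=.
apply/forallP=> x; apply/implyP=> hx.
have hx2 : [&& x != a, x != b & x != c] by case/and3P: hx => -> -> ->.
have /eqP h := implyP (fx x) hx2.
by rewrite -{1}h permK.
Qed.

Lemma c3_conj n (s g : {perm 'I_n}) : is_3cycle s -> is_3cycle (s ^ g).
Proof.
case/existsP=> a /existsP[b /existsP[c /and5P[ab bc ac /andP[/andP[/eqP sa /eqP sb] /eqP sc] /forallP fx]]].
apply/existsP; exists (g a); apply/existsP; exists (g b); apply/existsP; exists (g c).
rewrite !(inj_eq perm_inj) ab bc ac /= conjgE !permM !permK sa sb sc !eqxx /=.
apply/forallP=> x; rewrite -[x](permKV g) !(inj_eq perm_inj); apply/implyP=> hx.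
by rewrite !permM permK (eqP (implyP (fx _) hx)).
Qed.

Lemma c3_key n (X Y : {perm 'I_n}) : is_3cycle (Y^-1 * X) = is_3cycle (Y * X^-1).
Proof.
apply/idP/idP => h.
- have -> : Y * X^-1 = ((Y^-1 * X) ^ X^-1)^-1.
    by rewrite conjgE invgK !invMg !invgK !mulgA mulgV mul1g.
  by apply: c3_inv; apply: c3_conj.
- have -> : Y^-1 * X = ((Y * X^-1) ^ X)^-1.
    by rewrite conjgE !invMg !invgK !mulgA mulVg mul1g.
  by apply: c3_inv; apply: c3_conj.
Qed.

Theorem theorem2p1 (n : nat) (hn : 4 <= n) :
  let V := subg_of ('Alt_('I_n)) in
  let S : {set V} := [set u : V | is_3cycle (sgval u)] in
  invperm V \in graph_aut (cay_adj S) /\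
  ~ (rreg V <| graph_aut (cay_adj S)).
Proof.
move=> V S.
have hG : invperm V \in graph_aut (cay_adj S).
  rewrite inE; apply/forallP=> x; apply/forallP=> y; apply/eqP.
  rewrite /cay_adj /invperm !permE invgK !inE.
  exact: c3_key.
split=> // /andP[_ /subsetP nG].
pose a : 'I_n := Ordinal (leq_trans (isT : 0 < 4) hn).
pose b : 'I_n := Ordinal (leq_trans (isT : 1 < 4) hn).
pose c : 'I_n := Ordinal (leq_trans (isT : 2 < 4) hn).
pose d : 'I_n := Ordinal (leq_trans (isT : 3 < 4) hn).
have ab : a != b by []. have ac : a != c by []. have ad : a != d by [].
have bc : b != c by []. have bd : b != d by []. have cd : c != d by [].
pose g0 := tperm a b * tperm a c.
pose x0 := tperm a b * tperm c d.
have g0A : g0 \in 'Alt_('I_n) by rewrite Alt_even odd_permM !odd_tperm. 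
have x0A : x0 \in 'Alt_('I_n) by rewrite Alt_even odd_permM !odd_tperm. 
pose u0 : V := subg _ g0.
pose w : V := subg _ x0.
have hN := nG _ hG.
have hr : rtrans u0^-1 ^ invperm V \in rreg V.
  by rewrite memJ_norm //; apply: imset_f.
case/imsetP: hr => k _ hk.
have hv y : ((invperm V)^-1 y)^-1 = y.
  by rewrite -[in RHS](permKV (invperm V) y) [invperm V _]permE.
have E x : u0 * x = x * k.
  have := congr1 (fun p : {perm V} => p x) hk.
  rewrite /= conjgE !permM [rtrans k _]permE [rtrans u0^-1 _]permE [invperm V _]permE.
  by rewrite invMg invgK hv.
have Ek : k = u0 by have := E 1; rewrite mulg1 mul1g.
have := E w; rewrite Ek => /(congr1 sgval).
rewrite !sgvalM ?inE // /u0 /w /= -!/(val _) !subgK // => /(congr1 (fun p : {perm 'I_n} => p a)).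
rewrite !permM !permE /=.
by move/eqP; rewrite (negbTE ac).
Qed.
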